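(* Let $G=(V_G,E_G)$ and $H=(V_H,E_H)$ be two vertex-disjoint directed co-graphs. Then $\mathrm{pw}(\mathrm{un}(G\oslash H))>\mathrm{dpw}(G\oslash H)$.
   Context: Digraphs are finite, without loops or multiple arcs. Operations on vertex-disjoint digraphs $G_1,\ldots,G_k$: disjoint union $\oplus$ (union of vertex and arc sets); series composition $\otimes$ (disjoint union plus all arcs in both directions between vertices of different $G_i$); order composition $G_1\oslash\cdots\oslash G_k$ (disjoint union plus all arcs from vertices of $G_i$ to vertices of $G_j$ for $i<j$). Directed co-graphs: every single-vertex digraph, and closure under these three operations. $\mathrm{un}(G)$ is the underlying undirected graph of $G$ (edge $\{u,v\}$ iff $(u,v)$ or $(v,u)$ is an arc), and $\mathrm{pw}$ denotes the usual (undirected) path-width. A directed path-decomposition of $G=(V,E)$ is a sequence $(X_1,\ldots,X_r)$ of subsets of $V$ with $\bigcup X_i=V$, for each arc $(u,v)$ some $i\le j$ with $u\in X_i,v\in X_j$, and for each vertex the bags containing it having consecutive indices; width $\max|X_i|-1$; $\mathrm{dpw}(G)$ is the minimum width. *)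

(* Defs.v *)
From Stdlib Require Import ClassicalEpsilon.
From mathcomp Require Import all_boot all_order.
Set Implicit Arguments. Unset Strict Implicit. Unset Printing Implicit Defensive.

(* A digraph is given as a vertex set V : {set T} inside a finite universe T,
   together with an arc relation E : rel T; its arcs are the pairs (u,v) with
   u, v in V and E u v. *)

Section Defs.
Variable T : finType.

(* Directed co-graphs (on vertex set A, arcs = E restricted to A), built with
   binary versions of the three operations (k-ary ones are iterated binary ones). *)
Inductive dcograph (E : rel T) : {set T} -> Prop :=
| dco_single x : ~~ E x x -> dcograph E [set x]
| dco_union (A B : {set T}) : [disjoint A & B] -> dcograph E A -> dcograph E B ->
    (forall x y, x \in A -> y \in B -> ~~ E x y && ~~ E y x) ->
    dcograph E (A :|: B)
| dco_series (A B : {set T}) : [disjoint A & B] -> dcograph E A -> dcograph E B ->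
    (forall x y, x \in A -> y \in B -> E x y && E y x) ->
    dcograph E (A :|: B)
| dco_order (A B : {set T}) : [disjoint A & B] -> dcograph E A -> dcograph E B ->
    (forall x y, x \in A -> y \in B -> E x y && ~~ E y x) ->
    dcograph E (A :|: B).

Definition ocomp (E : rel T) (VG VH : {set T}) : rel T :=
  fun x y => [|| [&& x \in VG, y \in VG & E x y],
                 [&& x \in VH, y \in VH & E x y] |
                 (x \in VG) && (y \in VH)].

Definition un (E : rel T) : rel T := fun u v => E u v || E v u.

Definition bag (bags : seq {set T}) (i : nat) : {set T} := nth set0 bags i.

Definition consecutive (bags : seq {set T}) : Prop :=
  forall v i j k, i <= j -> j <= k -> k < size bags ->
    v \in bag bags i -> v \in bag bags k -> v \in bag bags j.

Definition width (bags : seq {set T}) : nat := (\max_(X <- bags) #|X|).-1.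

Definition is_pd (e : rel T) (V : {set T}) (bags : seq {set T}) : Prop :=
  [/\ forall i, i < size bags -> bag bags i \subset V,
      forall v, v \in V -> exists2 i, i < size bags & v \in bag bags i,
      forall u v, u \in V -> v \in V -> e u v ->
        exists2 i, i < size bags & (u \in bag bags i) && (v \in bag bags i)
    & consecutive bags].

Definition is_dpd (E : rel T) (V : {set T}) (bags : seq {set T}) : Prop :=
  [/\ forall i, i < size bags -> bag bags i \subset V,
      forall v, v \in V -> exists2 i, i < size bags & v \in bag bags i,
      forall u v, u \in V -> v \in V -> E u v ->
        exists i j, [/\ i <= j, j < size bags, u \in bag bags i & v \in bag bags j]
    & consecutive bags].

Lemma triv_consecutive (V : {set T}) : consecutive [:: V].
Proof. by move=> v [|i] [|j] [|k] //= _ _ _ ->. Qed.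

Lemma pd_exists (e : rel T) (V : {set T}) :
  exists k, exists bags, is_pd e V bags /\ width bags = k.
Proof.
exists (width [:: V]), [:: V]; split => //; split.
- by case.
- by move=> v vV; exists 0.
- by move=> u v uV vV _; exists 0 => //=; rewrite /bag /= uV vV.
- exact: triv_consecutive.
Qed.

Lemma dpd_exists (E : rel T) (V : {set T}) :
  exists k, exists bags, is_dpd E V bags /\ width bags = k.
Proof.
exists (width [:: V]), [:: V]; split => //; split.
- by case.
- by move=> v vV; exists 0.
- by move=> u v uV vV _; exists 0, 0.
- exact: triv_consecutive.
Qed.

Definition pbool (P : Prop) : bool := if excluded_middle_informative P then true else false.

Lemma pboolP (P : Prop) : pbool P <-> P.
Proof. by rewrite /pbool; case: excluded_middle_informative. Qed.

Lemma pd_exists' (e : rel T) (V : {set T}) :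
  exists k, pbool (exists bags, is_pd e V bags /\ width bags = k).
Proof. by have [k H] := pd_exists e V; exists k; apply/pboolP. Qed.

Lemma dpd_exists' (E : rel T) (V : {set T}) :
  exists k, pbool (exists bags, is_dpd E V bags /\ width bags = k).
Proof. by have [k H] := dpd_exists E V; exists k; apply/pboolP. Qed.

Definition pw (e : rel T) (V : {set T}) : nat := ex_minn (pd_exists' e V).
Definition dpw (E : rel T) (V : {set T}) : nat := ex_minn (dpd_exists' E V).

End Defs.

(* Main.v *)
Require Import Defs.
From mathcomp Require Import all_boot.
From mathcomp Require Import zify.
Set Implicit Arguments. Unset Strict Implicit.

Section Aux.
Variable T : finType.
Implicit Types (P : seq {set T}) (A B : {set T}).

Definition idxs P B := [seq i <- iota 0 (size P) | bag P i :&: B != set0].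
Definition R P A B := [seq bag P i :&: A | i <- idxs P B].

Lemma idxs_lt P B t : t < size (idxs P B) -> nth 0 (idxs P B) t < size P.
Proof.
move=> ht; have := mem_nth 0 ht; rewrite mem_filter mem_iota => /andP[_].
by rewrite add0n.
Qed.

Lemma idxs_mono P B t1 t2 : t1 <= t2 -> t2 < size (idxs P B) ->
  nth 0 (idxs P B) t1 <= nth 0 (idxs P B) t2.
Proof.
move=> h12 h2.
have so : sorted leq (idxs P B) by apply: sorted_filter; [exact: leq_trans | exact: iota_sorted].
apply: (sorted_leq_nth leq_trans leqnn 0 so) => //; rewrite inE.
exact: leq_ltn_trans h2.
Qed.

Lemma R_size P A B : size (R P A B) = size (idxs P B).
Proof. by rewrite size_map. Qed.

Lemma R_bag P A B t : t < size (R P A B) ->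
  exists2 i, i < size P & (bag (R P A B) t = bag P i :&: A) /\ (bag P i :&: B != set0).
Proof.
rewrite R_size => ht; exists (nth 0 (idxs P B) t); first exact: idxs_lt.
split; first by rewrite /bag (nth_map 0).
have := mem_nth 0 ht; rewrite mem_filter => /andP[] //.
Qed.

Lemma R_idx P A B i : i < size P -> bag P i :&: B != set0 ->
  exists2 t, t < size (R P A B) & bag (R P A B) t = bag P i :&: A.
Proof.
move=> hi hB.
have hin : i \in idxs P B by rewrite mem_filter hB mem_iota add0n hi.
exists (index i (idxs P B)); first by rewrite R_size index_mem.
by rewrite /bag (nth_map 0) ?index_mem // nth_index.
Qed.

Lemma R_consec P A B : consecutive P -> consecutive (R P A B).
Proof.
move=> hc v t1 t2 t3 h12 h23; rewrite R_size => h3.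
have h2 : t2 < size (idxs P B) by apply: leq_ltn_trans h3.
have h1 : t1 < size (idxs P B) by apply: leq_ltn_trans h2.
rewrite /bag !(nth_map 0) // !inE => /andP[a1 vA] /andP[a3 _].
rewrite vA andbT.
exact: (hc v _ _ _ (idxs_mono h12 h2) (idxs_mono h23 h3) (idxs_lt h3) a1 a3).
Qed.

Lemma pd_shift (e : rel T) V P b j : is_pd e V P -> b \in V -> j < size P ->
  b \notin bag P j ->
  exists2 k, k < size P & (b \in bag P k) /\
    (forall a, a \in bag P j -> e a b -> a \in bag P k).
Proof.
move=> [hsub hcov hedge hc] bV hj bj.
have [k0 hk0 bk0] := hcov b bV.
have [lt|gt] := ltnP k0 j.
- have exP : exists i, (i < j) && (b \in bag P i) by exists k0; rewrite lt bk0.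
  have ubP : forall i, (i < j) && (b \in bag P i) -> i <= j by move=> i /andP[/ltnW].
  case: (ex_maxnP exP ubP) => k /andP[kj bk] kmax.
  exists k; first exact: ltn_trans hj.
  split => // a aj eab.
  have aV : a \in V by apply: (subsetP (hsub j hj)).
  have [i hi /andP[ai bi]] := hedge a b aV bV eab.
  have ilej : i < j.
    rewrite ltnNge; apply/negP => ji.
    have : i != j by apply/eqP => eij; move: bj; rewrite -eij bi.
    move=> nij; have jlt : j < i by rewrite ltn_neqAle eq_sym nij ji.
    move: bj; rewrite (hc b k0 j i (ltnW lt) (ltnW jlt) hi bk0 bi) //.
  have ik : i <= k by apply: kmax; rewrite ilej bi.
  exact: (hc a i k j ik (ltnW kj) hj ai aj).
- have nk : k0 != j by apply/eqP => e0; move: bj; rewrite -e0 bk0.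
  have jk : j < k0 by rewrite ltn_neqAle eq_sym nk gt.
  have exP : exists i, (j < i) && (b \in bag P i) by exists k0; rewrite jk bk0.
  case: (ex_minnP exP) => k /andP[jk' bk] kmin.
  have kk0 : k <= k0 by apply: kmin; rewrite jk bk0.
  exists k; first exact: leq_ltn_trans hk0.
  split => // a aj eab.
  have aV : a \in V by apply: (subsetP (hsub j hj)).
  have [i hi /andP[ai bi]] := hedge a b aV bV eab.
  have jlei : j < i.
    rewrite ltnNge; apply/negP => ij.
    have : i != j by apply/eqP => eij; move: bj; rewrite -eij bi.
    move=> nij; have ilt : i < j by rewrite ltn_neqAle nij ij.
    move: bj; rewrite (hc b i j k0 (ltnW ilt) (ltnW jk) hk0 bi bk0) //.
  have ki : k <= i by apply: kmin; rewrite jlei bi.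
  exact: (hc a j k i (ltnW jk') ki hi aj ai).
Qed.


Lemma good (e : rel T) V P A B b0 j : is_pd e V P -> b0 \in B -> B \subset V ->
  (forall a b, a \in A -> b \in B -> e a b) -> j < size P ->
  exists2 k, k < size P & (bag P k :&: B != set0) /\ (bag P j :&: A \subset bag P k).
Proof.
move=> hpd b0B BV hAB hj.
case b0j: (b0 \in bag P j).
  exists j => //; split; last exact: subsetIl.
  by apply/set0Pn; exists b0; rewrite inE b0j b0B.
have [k hk [b0k hk2]] := pd_shift hpd (subsetP BV _ b0B) hj (negbT b0j).
exists k => //; split.
  by apply/set0Pn; exists b0; rewrite inE b0k b0B.
apply/subsetP => a; rewrite inE => /andP[aj aA]; apply: hk2 => //; exact: hAB.
Qed.

Lemma inR (e : rel T) V P A B b0 j u v : is_pd e V P -> b0 \in B -> B \subset V ->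
  (forall a b, a \in A -> b \in B -> e a b) -> j < size P ->
  u \in bag P j -> v \in bag P j -> u \in A -> v \in A ->
  exists2 t, t < size (R P A B) & (u \in bag (R P A B) t) && (v \in bag (R P A B) t).
Proof.
move=> hpd b0B BV hAB hj uj vj uA vA.
have [k hk [hkB sub]] := good hpd b0B BV hAB hj.
have [t ht bt] := R_idx A hk hkB.
exists t => //; rewrite bt !inE uA vA !andbT.
by rewrite (subsetP sub u) ?inE ?uj ?uA // (subsetP sub v) ?inE ?vj ?vA.
Qed.

Lemma R_mem P A B X : X \in R P A B ->
  exists2 i, i < size P & (X = bag P i :&: A) /\ (bag P i :&: B != set0).
Proof.
move=> /mapP [i]; rewrite mem_filter mem_iota add0n => /andP[hB /andP[_ hi]] ->.
by exists i.
Qed.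

Lemma R_sub P A B t v : t < size (R P A B) -> v \in bag (R P A B) t -> v \in A.
Proof.
move=> ht; have [i _ [-> _]] := R_bag ht; by rewrite inE => /andP[].
Qed.

Lemma consec_cat (s1 s2 : seq {set T}) : consecutive s1 -> consecutive s2 ->
  (forall v i k, i < size s1 -> k < size s2 -> v \in bag s1 i -> v \in bag s2 k -> False) ->
  consecutive (s1 ++ s2).
Proof.
move=> c1 c2 hx v i j k hij hjk; rewrite size_cat => hk.
rewrite /bag !nth_cat.
case: (ltnP k (size s1)) => k1.
  rewrite (leq_ltn_trans hij (leq_ltn_trans hjk k1)) (leq_ltn_trans hjk k1).
  exact: c1 hij hjk k1.
case: (ltnP i (size s1)) => i1.
  move=> vi vk; exfalso; apply: (hx v i (k - size s1) i1 _ vi vk).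
  by rewrite ltn_subLR // addnC.
have j1 : size s1 <= j by apply: leq_trans hij.
rewrite ltnNge j1 /=.
apply: (c2 v); [by rewrite leq_sub2r | by rewrite leq_sub2r | by rewrite ltn_subLR // addnC].
Qed.

End Aux.

Lemma dco_nonempty (T : finType) (E : rel T) Z : dcograph E Z -> exists x, x \in Z.
Proof.
elim => [x _| X Y _ _ [x xA] _ _ _|X Y _ _ [x xA] _ _ _|X Y _ _ [x xA] _ _ _];
  by [exists x; rewrite inE | exists x; rewrite inE xA].
Qed.

Theorem lemma3p9 (T : finType) (E : rel T) (VG VH : {set T}) :
  [disjoint VG & VH] -> dcograph E VG -> dcograph E VH ->
  dpw (ocomp E VG VH) (VG :|: VH) < pw (un (ocomp E VG VH)) (VG :|: VH).
Proof.
move=> dis dG dH.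
have [g0 g0G] := dco_nonempty dG.
have [h0 h0H] := dco_nonempty dH.
set F := ocomp E VG VH.
set V := VG :|: VH.
set e := un F.
have FGH : forall x y, x \in VG -> y \in VH -> F x y.
  by move=> x y xG yH; rewrite /F /ocomp xG yH !orbT.
have eGH : forall x y, x \in VG -> y \in VH -> e x y.
  by move=> x y xG yH; rewrite /e /un FGH.
have eHG : forall x y, x \in VH -> y \in VG -> e x y.
  by move=> x y xH yG; rewrite /e /un (FGH y x) ?orbT.
have noHG : forall x y, x \in VH -> y \in VG -> ~~ F x y.
  move=> x y xH yG; rewrite /F /ocomp (disjointFl dis xH) (disjointFr dis yG) /=.
  by rewrite !andbF.
have GV : VG \subset V by exact: subsetUl.
have HV : VH \subset V by exact: subsetUr.
rewrite /pw; case: ex_minnP => p /pboolP [P [hpd wP]] _.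
have [hsub hcov hedge hc] := hpd.
set RG := R P VG VH.
set RH := R P VH VG.
set D := RG ++ RH.
have bagD1 : forall t, t < size RG -> bag D t = bag RG t.
  by move=> t ht; rewrite /bag nth_cat ht.
have bagD2 : forall t, t < size RH -> bag D (size RG + t) = bag RH t.
  by move=> t ht; rewrite /bag nth_cat ltnNge leq_addr /= addKn.
have inG : forall u v j, j < size P -> u \in bag P j -> v \in bag P j ->
    u \in VG -> v \in VG ->
    exists2 t, t < size RG & (u \in bag RG t) && (v \in bag RG t).
  move=> u v j hj uj vj uG vG; exact: (inR hpd h0H HV eGH hj uj vj uG vG).
have inH : forall u v j, j < size P -> u \in bag P j -> v \in bag P j ->
    u \in VH -> v \in VH ->
    exists2 t, t < size RH & (u \in bag RH t) && (v \in bag RH t).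
  move=> u v j hj uj vj uH vH; exact: (inR hpd g0G GV eHG hj uj vj uH vH).
have covG : forall v, v \in VG -> exists2 t, t < size RG & v \in bag RG t.
  move=> v vG; have [j hj vj] := hcov v (subsetP GV v vG).
  by have [t ht /andP[vt _]] := inG v v j hj vj vj vG vG; exists t.
have covH : forall v, v \in VH -> exists2 t, t < size RH & v \in bag RH t.
  move=> v vH; have [j hj vj] := hcov v (subsetP HV v vH).
  by have [t ht /andP[vt _]] := inH v v j hj vj vj vH vH; exists t.
have hdpd : is_dpd F V D.
  split.
  - move=> t; rewrite size_cat => ht; apply/subsetP => v.
    case: (ltnP t (size RG)) => t1.
      by rewrite bagD1 // => /(R_sub t1) /(subsetP GV).
    have t2 : t - size RG < size RH by rewrite ltn_subLR // addnC.
    by rewrite -(subnKC t1) bagD2 // => /(R_sub t2) /(subsetP HV).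
  - move=> v; rewrite inE => /orP[vG|vH].
      have [t ht vt] := covG v vG; exists t; first by rewrite size_cat ltn_addr.
      by rewrite bagD1.
    have [t ht vt] := covH v vH; exists (size RG + t); first by rewrite size_cat ltn_add2l.
    by rewrite bagD2.
  - move=> u v; rewrite !inE => /orP[uG|uH] /orP[vG|vH] Fuv.
    + have euv : e u v by rewrite /e /un Fuv.
      have [j hj /andP[uj vj]] := hedge u v (subsetP GV u uG) (subsetP GV v vG) euv.
      have [t ht /andP[ut vt]] := inG u v j hj uj vj uG vG.
      exists t, t; split => //; rewrite ?size_cat ?ltn_addr ?bagD1 //.
    + have [t1 ht1 ut] := covG u uG; have [t2 ht2 vt] := covH v vH.
      exists t1, (size RG + t2); split.
      * exact: leq_trans (ltnW ht1) (leq_addr _ _).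
      * by rewrite size_cat ltn_add2l.
      * by rewrite bagD1.
      * by rewrite bagD2.
    + by move: Fuv; rewrite (negbTE (noHG u v uH vG)).
    + have euv : e u v by rewrite /e /un Fuv.
      have [j hj /andP[uj vj]] := hedge u v (subsetP HV u uH) (subsetP HV v vH) euv.
      have [t ht /andP[ut vt]] := inH u v j hj uj vj uH vH.
      exists (size RG + t), (size RG + t); split => //; rewrite ?size_cat ?ltn_add2l ?bagD2 //.
  - apply: consec_cat; try exact: R_consec.
    move=> v i k hi hk vi vk.
    have := R_sub hi vi; have := R_sub hk vk.
    by move=> vH vG; move: (disjointFr dis vG); rewrite vH.
have hw : width D < p.
  rewrite -wP /width.
  set M := \max_(X <- P) #|X|.
  set d := \max_(X <- D) #|X|.
  have dM : d <= M.-1.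
    apply/bigmax_leqP_seq => X XD _.
    have key : forall A B : {set T}, [disjoint A & B] -> X \in R P A B -> #|X| <= M.-1.
      move=> A B dAB /R_mem [i hi [-> hB]].
      have [b] := set0Pn _ hB; rewrite inE => /andP[bi bB].
      have lt : #|bag P i :&: A| < #|bag P i|.
        rewrite -(cardsID A (bag P i)) -[X in X < _]addn0 ltn_add2l card_gt0.
        by apply/set0Pn; exists b; rewrite inE bi (disjointFl dAB bB).
      have le : #|bag P i| <= M by apply: leq_bigmax_seq => //; exact: mem_nth.
      by move: lt le; clear; lia.
    move: XD; rewrite mem_cat => /orP[XG|XH].
      exact: (key VG VH dis).
    by apply: (key VH VG) => //; rewrite disjoint_sym.
  have d1 : 1 <= d.
    have [t ht vt] := covG g0 g0G.
    apply: (@leq_trans #|bag RG t|).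
      by rewrite card_gt0; apply/set0Pn; exists g0.
    apply: (@leq_bigmax_seq _ _ _ (fun X : {set T} => #|X|)) => //.
    by rewrite mem_cat (mem_nth set0 ht).
  by move: dM d1; clear; lia.
rewrite /dpw; case: ex_minnP => m _ hmin.
apply: leq_ltn_trans hw.
apply: hmin; apply/pboolP; exists D; split => //.
Qed.
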